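(* Let ${\bf A}=(a(i,j))_{1\le i,j\le n}$ be a real $n\times n$ matrix with no zero row, and suppose $$\min\Big(\min_{1\le i\le n}\#\{j:\ a(i,j)\ne 0\},\ \min_{1\le i\le n}\#\{j:\ a(j,i)\ne 0\}\Big)>n/2.$$ Then the matrix ${\bf A}_{\rm sde}$ associated with ${\bf A}$ (defined below) has $1$ as a simple eigenvalue, and all of its other eigenvalues lie in the open unit disk $\{z\in\mathbb{C}:|z|<1\}$.
   Context: For a real number $t$, $t_+=\max(t,0)$. Define $w_i=\big(\sum_{j=1}^n |a(i,j)|\big)^{-1}$, $\tilde a(i,j)=w_i\,a(i,j)$, $\tilde{\bf A}_+=\big((\tilde a(i,j))_+\big)_{i,j}$, $\tilde{\bf A}_-=\big((-\tilde a(i,j))_+\big)_{i,j}$, and $${\bf A}_{\rm sde}=\begin{pmatrix}\tilde{\bf A}_+ & \tilde{\bf A}_-\\ \tilde{\bf A}_+ & \tilde{\bf A}_-\end{pmatrix}\in\mathbb{R}^{2n\times 2n}.$$ *)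

(* Defs.v *)
From HB Require Import structures.
From mathcomp Require Import all_boot all_order all_algebra.
From mathcomp Require Import reals.
From mathcomp.real_closed Require Import complex.
Set Implicit Arguments. Unset Strict Implicit. Unset Printing Implicit Defensive.
Import Order.TTheory GRing.Theory Num.Theory.
Local Open Scope ring_scope.

Section Sde.
Variables (R : realType) (n : nat).
Implicit Type A : 'M[R]_n.

Definition sde_w A (i : 'I_n) : R := (\sum_(j < n) `|A i j|)^-1.
Definition sde_tilde A : 'M[R]_n := \matrix_(i, j) (sde_w A i * A i j).
Definition pospart (t : R) : R := Num.max t 0.
Definition sde_Apos A : 'M[R]_n := \matrix_(i, j) pospart (sde_tilde A i j).
Definition sde_Aneg A : 'M[R]_n := \matrix_(i, j) pospart (- sde_tilde A i j).
Definition A_sde A : 'M[R]_(n + n) :=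
  block_mx (sde_Apos A) (sde_Aneg A) (sde_Apos A) (sde_Aneg A).

Definition row_nnz A (i : 'I_n) : nat := #|[set j : 'I_n | A i j != 0]|.
Definition col_nnz A (i : 'I_n) : nat := #|[set j : 'I_n | A j i != 0]|.

Definition cplx_mx m (M : 'M[R]_m) : 'M[R[i]]_m := map_mx (real_complex R) M.
End Sde.

(* Main.v *)
Require Import Defs.
From HB Require Import structures.
From mathcomp Require Import all_boot all_order all_algebra.
From mathcomp Require Import reals.
From mathcomp.real_closed Require Import complex.
From mathcomp Require Import ring zify.
From Stdlib Require Import Lia.
Import Order.TTheory GRing.Theory Num.Theory.
Local Open Scope ring_scope.

Lemma sum_delta (T : pzSemiRingType) n (f : 'I_n -> T) (i : 'I_n) :
  \sum_j f j * (i == j)%:R = f i.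
Proof.
rewrite (bigD1 i) //= eqxx mulr1 big1 ?addr0 // => j /negbTE.
by rewrite eq_sym => ->; rewrite mulr0.
Qed.

Lemma sum_delta' (T : pzSemiRingType) n (f : 'I_n -> T) (i : 'I_n) :
  \sum_j f j * (j == i)%:R = f i.
Proof. by rewrite -(@sum_delta _ _ f i); apply: eq_bigr; move=> j _; rewrite eq_sym. Qed.

Section CplxLemma.
Variables (C : numClosedFieldType) (n : nat).

Lemma var_id (p v : 'I_n -> C) :
  (forall k, 0 <= p k) -> \sum_k p k = 1 ->
  let z := \sum_k p k * v k in
  \sum_k p k * `|v k - z| ^+ 2 = \sum_k p k * `|v k| ^+ 2 - `|z| ^+ 2.
Proof.
move=> p0 p1 z.
have zc : z^* = \sum_k p k * (v k)^*.
  rewrite /z rmorph_sum.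
  apply: eq_bigr; move=> k _.
  by rewrite rmorphM /= (geC0_conj (p0 k)).
have E k : p k * `|v k - z| ^+ 2 = p k * (v k * (v k)^*) - (p k * v k) * z^*
   - z * (p k * (v k)^*) + p k * (z * z^*).
  by rewrite normCK rmorphB; ring.
under eq_bigr do rewrite E.
rewrite !big_split /= !sumrN -!mulr_suml -mulr_sumr -zc -/z p1 mul1r.
under [X in _ = X - _]eq_bigr do rewrite normCK.
rewrite normCK; ring.
Qed.


Lemma eig_const (S : 'M[C]_n) :
  (forall i j, 0 <= S i j) -> (forall i, \sum_j S i j = 1) ->
  (forall i k, exists j, 0 < S i j /\ 0 < S j k) ->
  forall (v : 'I_n -> C) (l : C), 1 <= `|l| ->
  (forall i, \sum_j S i j * v j = l * v i) -> forall j k, v j = v k.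
Proof.
move=> S0 S1 Sp v l l1 Hv j k.
have [i _ Hi] := @real_arg_maxP _ _ j xpredT (fun m => `|v m|) isT
  (fun m _ => normr_real _).
set M := `|v i| in Hi.
pose T m := \sum_a S i a * S a m.
have T0 m : 0 <= T m by apply: sumr_ge0 => a _; rewrite mulr_ge0.
have Tp m : 0 < T m.
  have [a [Ha1 Ha2]] := Sp i m.
  rewrite /T (bigD1 a) //=; apply: ltr_wpDr; last by rewrite mulr_gt0.
  by apply: sumr_ge0 => b _; rewrite mulr_ge0.
have T1 : \sum_m T m = 1.
  rewrite /T exchange_big /= -(S1 i); apply: eq_bigr; move=> a _.
  by rewrite -mulr_sumr S1 mulr1.
have Tv : \sum_m T m * v m = l ^+ 2 * v i.
  rewrite /T.
  under eq_bigr do rewrite mulr_suml.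
  rewrite exchange_big /=.
  under eq_bigr do (under eq_bigr do rewrite -mulrA; rewrite -mulr_sumr Hv mulrCA).
  by rewrite -mulr_sumr Hv mulrA -expr2.
have := var_id T v T0 T1; rewrite Tv => VI.
set z := l ^+ 2 * v i in VI.
have M0 : 0 <= M by rewrite normr_ge0.
have zM : M <= `|z|.
  rewrite /z normrM normrX -{1}(mul1r M); apply: ler_wpM2r => //.
  by apply: exprn_ege1.
have Hle : \sum_m T m * `|v m - z| ^+ 2 <= 0.
  rewrite VI subr_le0.
  apply: (le_trans (y := \sum_m T m * M ^+ 2)).
    apply: ler_sum => m _; apply: ler_wpM2l => //.
    by apply: lerXn2r; rewrite ?nnegrE ?normr_ge0 //; apply: Hi.
  by rewrite -mulr_suml T1 mul1r; apply: lerXn2r; rewrite ?nnegrE ?normr_ge0.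
have H0 : \sum_m T m * `|v m - z| ^+ 2 = 0.
  apply/le_anti; rewrite Hle /=; apply: sumr_ge0; move=> m _; rewrite mulr_ge0 // exprn_ge0 //.
have Ez m : v m = z.
  have Hg : forall x : 'I_n, true -> 0 <= T x * `|v x - z| ^+ 2.
    by move=> x _; rewrite mulr_ge0 // exprn_ge0.
  have /eqP := @psumr_eq0P _ _ _ _ Hg H0 m isT. rewrite mulf_eq0 (gt_eqF (Tp m)) /= expf_eq0 /= normr_eq0 subr_eq0.
  by move/eqP.
by rewrite !Ez.
Qed.

End CplxLemma.

Lemma shift_zero (F : realDomainType) n (S : 'M[F]_n) :
  (forall i j, 0 <= S i j) -> (forall i, \sum_j S i j = 1) ->
  forall (x : 'I_n -> F) (c : F) (i0 : 'I_n),
  (forall i, \sum_j S i j * x j = x i + c) -> c = 0.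
Proof.
move=> S0 S1 x c i0 Hx.
have [i _ Hi] := @real_arg_maxP _ _ i0 xpredT x isT (fun m _ => num_real _).
have [i' _ Hi'] := @real_arg_minP _ _ i0 xpredT x isT (fun m _ => num_real _).
apply/le_anti/andP; split.
  have : x i + c <= x i.
    rewrite -Hx -[X in _ <= X](mul1r (x i)) -(S1 i) mulr_suml.
    by apply: ler_sum => m _; apply: ler_wpM2l => //; apply: Hi.
  by rewrite gerDl.
have : x i' <= x i' + c.
  rewrite -Hx -[X in X <= _](mul1r (x i')) -(S1 i') mulr_suml.
  by apply: ler_sum => m _; apply: ler_wpM2l => //; apply: Hi'.
by rewrite lerDl.
Qed.

Lemma char_poly_trmx (T : comNzRingType) n (M : 'M[T]_n) :
  char_poly M^T = char_poly M.
Proof.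
rewrite /char_poly -det_tr; congr (\det _).
by apply/matrixP => i j; rewrite !mxE eq_sym.
Qed.

Lemma char_poly_sde (T : comNzRingType) n (P N : 'M[T]_n) :
  char_poly (block_mx P N P N) = 'X^n * char_poly (P + N).
Proof.
rewrite /char_poly /char_poly_mx map_block_mx (scalar_mx_block n n).
rewrite opp_block_mx add_block_mx.
set X : 'M[{poly T}]_n := 'X%:M.
set P' := map_mx polyC P; set N' := map_mx polyC N.
set L : 'M[{poly T}]_(n + n) := block_mx 1%:M 0 (-1%:M) 1%:M.
set Rm : 'M[{poly T}]_(n + n) := block_mx 1%:M 0 1%:M 1%:M.
have dL : \det L = 1 by rewrite det_lblock !det1 mulr1.
have dR : \det Rm = 1 by rewrite det_lblock !det1 mulr1.
match goal with |- \det ?Cm = _ =>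
  rewrite -(_ : \det (L *m Cm *m Rm) = \det Cm); last first
end.
  by rewrite !det_mulmx dL dR mul1r mulr1.
rewrite !mulmx_block !(mul1mx, mul0mx, mulmx1, mulmx0, mulNmx, addr0, add0r).
match goal with |- \det (block_mx ?a ?b ?c ?d) = _ =>
  rewrite (_ : block_mx a b c d = block_mx (X - P' - N') (- N') 0 X); last first
end.
  by congr block_mx; apply/matrixP => i j; rewrite !mxE; ring.
rewrite det_ublock det_scalar mulrC map_mxD; congr (_ * \det _).
  by rewrite -!addrA; congr (_ + _); rewrite opprD.
Qed.

Lemma char_fact (F : realFieldType) n' (S : 'M[F]_n'.+1) :
  (forall i j, 0 <= S i j) -> (forall i, \sum_j S i j = 1) ->
  (forall x : 'I_n'.+1 -> F, (forall i, \sum_j S i j * x j = x i) ->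
     forall j k, x j = x k) ->
  exists q : {poly F}, char_poly S = ('X - 1) * q /\ q.[1] != 0.
Proof.
move=> S0 S1 Sc.
set Cm := char_poly_mx S.
pose Q : 'M[{poly F}]_n'.+1 := \matrix_(i, j) (if j == ord0 then 1 else (i == j)%:R).
pose K : 'M[{poly F}]_n'.+1 := \matrix_(i, j) (if j == ord0 then 1 else Cm i j).
pose d : 'rV[{poly F}]_n'.+1 := \row_j (if j == ord0 then 'X - 1 else 1).
have dQ : \det Q = 1.
  rewrite det_trig; last first.
    apply/is_trig_mxP => i j lt_ij; rewrite mxE.
    case: eqP => [j0|_]; first by rewrite j0 ltn0 in lt_ij.
    by case: (i =P j) => [ij|//]; rewrite ij ltnn in lt_ij.
  by apply: big1 => i _; rewrite mxE eqxx; case: ifP.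
have dd : \det (diag_mx d) = 'X - 1.
  rewrite det_diag (bigD1 ord0) //= mxE eqxx big1 ?mulr1 // => i /negbTE Hi.
  by rewrite mxE Hi.
have E : Cm *m Q = K *m diag_mx d.
  rewrite mul_mx_diag; apply/matrixP => i j.
  case: (eqVneq j ord0) => [jE|j0].
    rewrite jE !mxE.
    under eq_bigr do rewrite !mxE eqxx mulr1 -mulr_natr.
    by rewrite eqxx mul1r sumrB (@sum_delta _ _ (fun _ => 'X)) -rmorph_sum /= S1.
  rewrite !mxE (negbTE j0).
  under eq_bigr do rewrite !mxE (negbTE j0).
  by rewrite mulr1 sum_delta'.
have cpE : char_poly S = \det K * ('X - 1).
  by rewrite -dd -det_mulmx -E det_mulmx dQ mulr1.
exists (\det K); split; first by rewrite cpE mulrC.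
have -> : (\det K).[1] = \det (map_mx (horner_eval 1) K).
  by rewrite (det_map_mx (horner_eval 1)).
set N := map_mx (horner_eval 1) K.
have NE i j : N i j = if j == ord0 then 1 else (i == j)%:R - S i j.
  rewrite /N /K !mxE; case: ifP => _; first by rewrite /horner_eval hornerE.
  by rewrite /Cm /char_poly_mx /horner_eval hornerE hornerMn hornerN hornerC hornerX.
rewrite (_ : \det N = \det N^T); last by rewrite det_tr.
apply/det0P => -[v vn0 vN].
have Hrow i : \sum_j v 0 j * N i j = 0.
  move/rowP: vN => /(_ i); rewrite !mxE => H.
  rewrite -[RHS]H. apply: eq_bigr; move=> j _. by rewrite [N^T j i]mxE.
pose x j := if j == ord0 then 0 else v 0 j.
pose c := v 0 ord0.
have L0 k : (lift ord0 k == ord0) = false.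
  by rewrite eq_sym; apply: negbTE; apply: neq_lift.
have key : forall r : 'I_n'.+1,
    \sum_j v 0 j * N r j = c + \sum_j x j * ((r == j)%:R - S r j).
  move=> r.
  rewrite !big_ord_recl /x eqxx mul0r add0r NE eqxx mulr1; congr (_ + _).
  by apply: eq_bigr; move=> k _; rewrite NE L0.
have Hx i : \sum_j S i j * x j = x i + c.
  have := Hrow i; rewrite key.
  under eq_bigr do rewrite mulrBr.
  rewrite sumrB sum_delta.
  under eq_bigr do rewrite mulrC.
  move=> H.
  have -> : \sum_j S i j * x j = x i + c - (c + (x i - \sum_j S i j * x j)) by ring.
  by rewrite H subr0.
have c0 : c = 0 := @shift_zero _ _ S S0 S1 x c ord0 Hx.
have Hx' i : \sum_j S i j * x j = x i by rewrite Hx c0 addr0.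
have x0 j : x j = 0 by rewrite (Sc x Hx' j ord0) /x eqxx.
move/negP: vn0; apply; apply/eqP/rowP => j; rewrite mxE.
case: (eqVneq j ord0) => [->|jn]; first exact: c0.
by have := x0 j; rewrite /x (negbTE jn).
Qed.

Lemma pos_neg (F : realType) (t : F) :
  pospart t + pospart (- t) = `|t|.
Proof.
rewrite /pospart /Order.max /=.
case: (ltrP t 0) => h.
  by rewrite (_ : (- t < 0) = false) ?add0r ?ltr0_norm //; apply/negbTE; rewrite -leNgt oppr_ge0 ltW.
case: (ltrP (- t) 0) => h'.
  by rewrite addr0 ger0_norm.
have t0 : t = 0 by apply/le_anti; rewrite h -oppr_ge0 h'.
by rewrite t0 oppr0 addr0 normr0.
Qed.

Lemma rc_gt0 (R : realType) (x : R) : (0 < real_complex R x) = (0 < x).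
Proof. exact: (ltcR 0 x). Qed.

Lemma rc_ge0 (R : realType) (x : R) : (0 <= real_complex R x) = (0 <= x).
Proof. exact: (lecR 0 x). Qed.

Theorem proposition3 (R : realType) (n : nat) (A : 'M[R]_n) :
  (0 < n)%N ->
  (forall i : 'I_n, exists j : 'I_n, A i j != 0) ->
  (forall i : 'I_n, (n%:R / 2 : R) < (row_nnz A i)%:R) ->
  (forall i : 'I_n, (n%:R / 2 : R) < (col_nnz A i)%:R) ->
  let p := char_poly (cplx_mx (A_sde A)) in
  mup 1 p = 1%N /\
  (forall z : R[i], root p z -> z != 1 -> `|z| < 1).
Proof.
case: n A => [|n'] A; first by rewrite ltnn.
move=> n0 Hnz Hr Hc p.
set S := sde_Apos A + sde_Aneg A.
have wpos i : 0 < sde_w A i.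
  rewrite /sde_w invr_gt0; have [j Hj] := Hnz i.
  rewrite (bigD1 j) //=; apply: ltr_wpDr; last by rewrite normr_gt0.
  by apply: sumr_ge0 => k _.
have SE i j : S i j = sde_w A i * `|A i j|.
  by rewrite /S !mxE pos_neg normrM ger0_norm // ltW.
have S0 i j : 0 <= S i j by rewrite SE mulr_ge0 // ltW.
have S1 i : \sum_j S i j = 1.
  under eq_bigr do rewrite SE.
  rewrite -mulr_sumr /sde_w mulVf //; apply: lt0r_neq0.
  by rewrite -invr_gt0; apply: wpos.
have Spos i j : (0 < S i j) = (A i j != 0).
  by rewrite SE pmulr_rgt0 // normr_gt0.
have Scomb i k : exists j, 0 < S i j /\ 0 < S j k.
  set Ri := [set j | A i j != 0]; set Ck := [set j | A j k != 0].
  have hr : (n'.+1 < #|Ri| * 2)%N.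
    have := Hr i; rewrite ltr_pdivrMr // -natrM ltr_nat; exact.
  have hc : (n'.+1 < #|Ck| * 2)%N.
    have := Hc k; rewrite ltr_pdivrMr // -natrM ltr_nat; exact.
  have hu := cardsUI Ri Ck.
  have hm : (#|Ri :|: Ck| <= n'.+1)%N.
    by apply: (leq_trans (max_card _)); rewrite card_ord.
  have : (0 < #|Ri :&: Ck|)%N by lia.
  rewrite card_gt0 => /set0Pn [j]; rewrite !inE => /andP [h1 h2].
  by exists j; rewrite !Spos.
pose Sc := map_mx (real_complex R) S.
have ScE i j : Sc i j = real_complex R (S i j) by rewrite /Sc mxE.
have Sc0 i j : 0 <= Sc i j by rewrite ScE rc_ge0.
have Sc1 i : \sum_j Sc i j = 1.
  by under eq_bigr do rewrite ScE; rewrite -rmorph_sum S1 rmorph1.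
have Scc i k : exists j, 0 < Sc i j /\ 0 < Sc j k.
  by have [j [h1 h2]] := Scomb i k; exists j; rewrite !ScE !rc_gt0.
have EC := @eig_const _ _ Sc Sc0 Sc1 Scc.
have Sconst (x : 'I_n'.+1 -> R) : (forall i, \sum_j S i j * x j = x i) ->
    forall j k, x j = x k.
  move=> Hx j k; apply: complexI.
  apply: (EC (fun m => (real_complex R) (x m)) 1); first by rewrite normr1.
  move=> i; rewrite mul1r -(Hx i) rmorph_sum; apply: eq_bigr; move=> m _.
  by rewrite ScE rmorphM.
have [q [cpE q1]] := @char_fact _ _ S S0 S1 Sconst.
have pE : p = 'X^(n'.+1) * (('X - 1) * map_poly (real_complex R) q).
  rewrite /p /cplx_mx /A_sde map_block_mx char_poly_sde -map_mxD -/S.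
  by rewrite -map_char_poly cpE rmorphM rmorphB /= map_polyX rmorph1.
split.
  rewrite pE mupMr; last by rewrite rootE hornerXn expr1n oner_eq0.
  rewrite mupMl; last first.
    by rewrite rootE -(rmorph1 (real_complex R)) horner_map fmorph_eq0.
  have -> : ('X - 1 : {poly R[i]}) = ('X - 1%:P) ^+ 1 by rewrite expr1 polyC1.
  by rewrite mup_XsubCX eqxx.
move=> z rz z1.
have [->|zn0] := eqVneq z 0; first by rewrite normr0 ltr01.
have rz' : root (char_poly Sc^T) z.
  move: rz; rewrite /p /cplx_mx /A_sde map_block_mx char_poly_sde -map_mxD -/S.
  by rewrite char_poly_trmx rootM rootE hornerXn expf_eq0 (negbTE zn0) andbF.
move: rz'; rewrite -eigenvalue_root_char => /eigenvalueP [v vE vn0].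
have Hv i : \sum_j Sc i j * v 0 j = z * v 0 i.
  move/rowP: vE => /(_ i); rewrite [LHS]mxE [RHS]mxE => <-.
  by apply: eq_bigr; move=> j _; rewrite [Sc^T j i]mxE mulrC.
rewrite real_ltNge ?normr_real ?real1 //; apply/negP => hz.
have vc := EC (fun m => v 0 m) z hz Hv.
have v0 : v 0 ord0 != 0.
  apply: contra vn0 => /eqP h; apply/eqP/rowP => j; rewrite mxE.
  by have := vc j ord0; rewrite /= h.
have := Hv ord0.
under eq_bigr do rewrite (vc _ ord0).
rewrite -mulr_suml Sc1 mul1r => /eqP.
rewrite -{1}(mul1r (v 0 ord0)) (inj_eq (mulIf v0)) eq_sym.
by move/negP: z1.
Qed.
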